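(* Let $A_n$ be the set of binary words of length $n$ that contain no $3$-antipower as a factor, and let $k \geq 6$. Then \begin{itemize} \item $A_{3k} = \mathcal{C}_{3k}\left(0^* \cup (01)^* \cup (01)^* 0 \cup 0^*10^* \cup 0^*011 \cup 0^*101\right)$, \item $A_{3k+1} = \mathcal{C}_{3k+1}\left(0^* \cup (01)^* \cup (01)^* 0 \cup 0^*10^* \cup 0^*011 \cup 0^*101 \cup 10^*1\right)$, \item $A_{3k+2} = \mathcal{C}_{3k+2}\left(0^* \cup (01)^* \cup (01)^* 0 \cup 0^*10^* \cup 0^*011 \cup 0^*101 \cup 10^*1 \cup 10^*10 \cup 10^*11\right)$. \end{itemize} In particular, for $k \geq 6$ there are exactly $6k+12$ (resp. $6k+16$, $6k+26$) binary words of length $3k$ (resp. $3k+1$, $3k+2$) avoiding $3$-antipowers.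
   Context: Words are over $\{0,1\}$. A $3$-antipower is a word $u_1u_2u_3$ with $|u_1|=|u_2|=|u_3|$ and $u_1,u_2,u_3$ pairwise distinct; a factor is a contiguous subword; a word avoids $3$-antipowers if it has no $3$-antipower as a factor. For a word $w$, $w^* = \{\varepsilon, w, w^2, \dots\}$, and sets of words are written as regular expressions. For a language $L \subseteq \{0,1\}^*$, $\mathcal{C}_n(L)$ denotes the closure of $L \cap \{0,1\}^n$ under bitwise complementation (exchanging $0$ and $1$) and reversal; i.e., it consists of all length-$n$ words of $L$, their bitwise complements, their reversals, and the bitwise complements of their reversals. *)

(* Defs.v *)
From mathcomp Require Import all_boot.
Set Implicit Arguments. Unset Strict Implicit. Unset Printing Implicit Defensive.

(* Binary words: seq bool, with letter 0 = false and letter 1 = true. *)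
Notation word := (seq bool).

Definition factor (x w : word) : Prop := exists p s : word, w = p ++ x ++ s.

Definition antipower3 (x : word) : Prop :=
  exists u1 u2 u3 : word,
    x = u1 ++ u2 ++ u3 /\ size u1 = size u2 /\ size u2 = size u3 /\
    u1 <> u2 /\ u1 <> u3 /\ u2 <> u3.

Definition avoids_antipower3 (w : word) : Prop :=
  ~ (exists x, factor x w /\ antipower3 x).

Definition A (n : nat) (w : word) : Prop := size w = n /\ avoids_antipower3 w.

Definition compl (w : word) : word := map negb w.

Definition Cl (n : nat) (L : word -> Prop) (w : word) : Prop :=
  exists u : word, [/\ size u = n, L u &
    (w = u \/ w = compl u \/ w = rev u \/ w = compl (rev u))].

Definition L_0star (w : word) : Prop := exists a, w = nseq a false.
Definition L_01star (w : word) : Prop := exists m, w = flatten (nseq m [:: false; true]).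
Definition L_01star0 (w : word) : Prop :=
  exists m, w = flatten (nseq m [:: false; true]) ++ [:: false].
Definition L_0star10star (w : word) : Prop :=
  exists a b, w = nseq a false ++ true :: nseq b false.
Definition L_0star011 (w : word) : Prop :=
  exists a, w = nseq a false ++ [:: false; true; true].
Definition L_0star101 (w : word) : Prop :=
  exists a, w = nseq a false ++ [:: true; false; true].
Definition L_10star1 (w : word) : Prop :=
  exists a, w = true :: nseq a false ++ [:: true].
Definition L_10star10 (w : word) : Prop :=
  exists a, w = true :: nseq a false ++ [:: true; false].
Definition L_10star11 (w : word) : Prop :=
  exists a, w = true :: nseq a false ++ [:: true; true].

Definition L0 (w : word) : Prop :=
  L_0star w \/ L_01star w \/ L_01star0 w \/ L_0star10star w \/
  L_0star011 w \/ L_0star101 w.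
Definition L1 (w : word) : Prop := L0 w \/ L_10star1 w.
Definition L2 (w : word) : Prop := L1 w \/ L_10star10 w \/ L_10star11 w.

Definition has_card (P : word -> Prop) (N : nat) : Prop :=
  exists s : seq word, [/\ uniq s, size s = N & forall w, w \in s <-> P w].

(* Main.v *)
Require Import Defs.
From mathcomp Require Import all_boot.
From mathcomp Require Import zify.
Set Implicit Arguments. Unset Strict Implicit. Unset Printing Implicit Defensive.


Definition mkw (n : nat) (P : seq nat) : word := mkseq (fun i => i \in P) n.
Definition ones (w : word) : seq nat := [seq i <- iota 0 (size w) | nth false w i].

Lemma size_mkw n P : size (mkw n P) = n. Proof. by rewrite size_mkseq. Qed.
Lemma nth_mkw n P i : nth false (mkw n P) i = (i < n) && (i \in P).
Proof. rewrite /mkw; case: ltnP => H. by rewrite nth_mkseq. by rewrite nth_default // size_mkseq. Qed.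
Lemma mem_ones w i : (i \in ones w) = (i < size w) && nth false w i.
Proof. by rewrite mem_filter mem_iota add0n andbC. Qed.
Lemma sorted_ones w : sorted ltn (ones w).
Proof. apply: sorted_filter; [exact: ltn_trans | exact: iota_ltn_sorted]. Qed.
Lemma word_eq (w1 w2 : word) : size w1 = size w2 ->
  (forall i, i < size w1 -> nth false w1 i = nth false w2 i) -> w1 = w2.
Proof. move=> Hs H; apply: (eq_from_nth (x0:=false)) => // i Hi; exact: H. Qed.
Lemma mkw_ones w : mkw (size w) (ones w) = w.
Proof. apply: word_eq; rewrite ?size_mkw // => i Hi; by rewrite nth_mkw mem_ones Hi. Qed.
Lemma sorted_eqP (s1 s2 : seq nat) : sorted ltn s1 -> sorted ltn s2 -> s1 =i s2 -> s1 = s2.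
Proof. exact: (irr_sorted_eq ltn_trans ltnn). Qed.
Lemma ones_mkw n Q : sorted ltn Q -> all (fun i => i < n) Q -> ones (mkw n Q) = Q.
Proof.
move=> Hs Ha; apply: sorted_eqP => //; first exact: sorted_ones.
move=> i; rewrite mem_ones nth_mkw size_mkw andbA andbb.
case Hi: (i \in Q); last by rewrite andbF.
by rewrite (allP Ha i Hi).
Qed.
Lemma size_ones w : size (ones w) = count id w.
Proof. rewrite size_filter; rewrite -[in RHS](mkseq_nth false w) /mkseq count_map; exact: eq_count. Qed.
Lemma ones_take n w : ones (take n w) = [seq i <- ones w | i < n].
Proof.
apply: sorted_eqP; [exact: sorted_ones| apply: sorted_filter; [exact: ltn_trans|exact: sorted_ones]|].
move=> i; rewrite !mem_ones mem_filter mem_ones size_take_min.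
case: (ltnP i n) => Hin /=.
  by rewrite nth_take //; congr (_ && _); lia.
by rewrite andbC; apply/negbTE; lia.
Qed.
Lemma ones_behead w : ones (behead w) = [seq i - 1 | i <- ones w & 0 < i].
Proof.
apply: sorted_eqP; first exact: sorted_ones.
  rewrite sorted_map; apply: (@sub_in_sorted _ (fun i => 0 < i) ltn).
  - move=> x y /= Hx Hy Hxy; lia.
  - by rewrite all_filter; apply/allP => x _; apply/implyP.
  - apply: sorted_filter; [exact: ltn_trans|exact: sorted_ones].
move=> i; rewrite mem_ones size_behead nth_behead.
apply/idP/mapP.
- move=> /andP [H1 H2]; exists i.+1; last by lia.
  by rewrite mem_filter mem_ones H2 /=; apply/andP; split => //; case: w H1 {H2} => //= _ s; lia.
- move=> [j]; rewrite mem_filter mem_ones => /and3P [H0 H1 H2] ->.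
  have -> : (j - 1).+1 = j by lia.
  rewrite H2 andbT; case: w H1 {H2} => //= _ s; lia.
Qed.

Lemma complK w : compl (compl w) = w.
Proof. by rewrite /compl -map_comp map_id_in // => x _ /=; rewrite negbK. Qed.
Lemma size_compl w : size (compl w) = size w. Proof. exact: size_map. Qed.
Lemma count_compl w : count id (compl w) = size w - count id w.
Proof. rewrite /compl count_map -(count_predC id w); have ->: count (preim negb id) w = count (predC id) w by apply: eq_count. lia. Qed.


Lemma factor_take x w n : factor x (take n w) -> factor x w.
Proof. move=> [p [s E]]; exists p, (s ++ drop n w); by rewrite -{1}(cat_take_drop n w) E -!catA. Qed.

Lemma factor_behead x w : factor x (behead w) -> factor x w.
Proof.
case: w => [|a w] //= [p [s E]]; exists (a :: p), s; by rewrite E.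
Qed.

Lemma avoidsF n w : size w = n.+1 -> (avoids_antipower3 w <->
  [/\ avoids_antipower3 (take n w), avoids_antipower3 (behead w) & ~ antipower3 w]).
Proof.
move=> Hs; split.
- move=> H; split.
  + move=> [x [Hf Ha]]; apply: H; exists x; split => //; exact: factor_take Hf.
  + move=> [x [Hf Ha]]; apply: H; exists x; split => //; exact: factor_behead Hf.
  + move=> Ha; apply: H; exists w; split => //; exists [::], [::]; by rewrite cats0.
- move=> [H1 H2 H3] [x [[p [s E]] Hx]].
  case/lastP: s E => [|s y] E.
  + case: p E => [|z p] E.
    * by apply: H3; rewrite E cats0.
    * apply: H2; exists x; split => //; exists p, [::]; by rewrite E.
  + apply: H1; exists x; split => //; exists p, s.
    have -> : w = (p ++ x ++ s) ++ [:: y] by rewrite E -cats1 -!catA.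
    rewrite take_size_cat //.
    move: Hs; rewrite E -cats1 !size_cat /=; lia.
Qed.

Lemma neq_nth (s t : word) : size s = size t -> s <> t ->
  exists2 i, i < size s & nth false s i != nth false t i.
Proof.
move=> Hs Hne.
case Hh: (has (fun i => nth false s i != nth false t i) (iota 0 (size s))).
- case/hasP: Hh => i; rewrite mem_iota => /andP [_ Hi] H; by exists i.
- exfalso; apply: Hne; apply: word_eq => // i Hi.
  move/hasPn: Hh => /(_ i); rewrite mem_iota Hi /= => /(_ isT); by move/negPn/eqP.
Qed.

Definition apn (x : word) l :=
  [/\ size x = 3 * l, (exists2 i, i < l & nth false x i != nth false x (i + l)),
    (exists2 i, i < l & nth false x i != nth false x (i + 2 * l)) &
    (exists2 i, i < l & nth false x (i + l) != nth false x (i + 2 * l))].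

Lemma ap_nth x : antipower3 x <-> exists l, apn x l.
Proof.
split.
- move=> [u1 [u2 [u3 [E [S1 [S2 [N1 [N2 N3]]]]]]]].
  exists (size u1); subst x.
  have A1 i : i < size u1 -> nth false (u1 ++ u2 ++ u3) i = nth false u1 i.
    by move=> Hi; rewrite nth_cat Hi.
  have A2 i : i < size u1 -> nth false (u1 ++ u2 ++ u3) (i + size u1) = nth false u2 i.
    move=> Hi; rewrite nth_cat ifF; last by lia.
    by rewrite nth_cat ifT -?S1; [congr nth; lia| lia].
  have A3 i : i < size u1 -> nth false (u1 ++ u2 ++ u3) (i + 2 * size u1) = nth false u3 i.
    move=> Hi; rewrite nth_cat ifF; last by lia.
    by rewrite nth_cat ifF -?S1; [congr nth; lia| lia].
  split.
  + rewrite !size_cat; lia.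
  + case: (neq_nth S1 N1) => i Hi H; exists i => //; by rewrite A1 // A2.
  + have S3 : size u1 = size u3 by lia.
    case: (neq_nth S3 N2) => i Hi H; exists i => //; by rewrite A1 // A3.
  + have S3 : size u2 = size u3 by lia.
    case: (neq_nth S3 N3) => i Hi H; exists i; [lia|]; rewrite A2 ?A3 //; lia.
- move=> [l [Hs [i1 Hi1 H1] [i2 Hi2 H2] [i3 Hi3 H3]]].
  exists (take l x), (take l (drop l x)), (drop (2 * l) x).
  have Sd : size (drop l x) = 2 * l by rewrite size_drop; lia.
  split.
    by rewrite -{1}(cat_take_drop l x) -{1}(cat_take_drop l (drop l x)) drop_drop; congr (_ ++ _ ++ drop _ _); lia.
  split; first by rewrite !size_take_min !size_drop; lia.
  split; first by rewrite !size_take_min !size_drop; lia.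
  split.
    move=> E; move/eqP: H1; apply; move/(congr1 (fun s => nth false s i1)): E.
    by rewrite nth_take // nth_take // nth_drop addnC.
  split.
    move=> E; move/eqP: H2; apply; move/(congr1 (fun s => nth false s i2)): E.
    by rewrite nth_take // nth_drop addnC.
  move=> E; move/eqP: H3; apply; move/(congr1 (fun s => nth false s i3)): E.
  by rewrite nth_take // !nth_drop; congr (nth _ _ _ = nth _ _ _); lia.
Qed.

Lemma antipower3_compl x : antipower3 (compl x) <-> antipower3 x.
Proof.
rewrite !ap_nth; split => -[l [Hs [i1 Hi1 H1] [i2 Hi2 H2] [i3 Hi3 H3]]]; exists l;
  move: Hs; rewrite ?size_compl => Hs.
- split => //; [exists i1|exists i2|exists i3] => //; move: H1 H2 H3; rewrite /compl !(nth_map false); try lia;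
  by case: (nth _ _ _); case: (nth _ _ _).
- split; rewrite ?size_compl //; [exists i1|exists i2|exists i3] => //; rewrite /compl !(nth_map false); try lia;
  move: H1 H2 H3; by case: (nth _ _ _); case: (nth _ _ _).
Qed.

Definition apb (x : word) : bool :=
  let l := size x %/ 3 in
  [&& size x == 3 * l, take l x != take l (drop l x), take l x != drop (2 * l) x &
      take l (drop l x) != drop (2 * l) x].

Lemma apbP x : reflect (antipower3 x) (apb x).
Proof.
apply: (iffP idP).
- case/and4P => /eqP Hs H1 H2 H3.
  set l := size x %/ 3 in Hs H1 H2 H3.
  exists (take l x), (take l (drop l x)), (drop (2 * l) x).
  have Sd : size (drop l x) = 2 * l by rewrite size_drop; lia.
  split.
    by rewrite -{1}(cat_take_drop l x) -{1}(cat_take_drop l (drop l x)) drop_drop; congr (_ ++ _ ++ drop _ _); lia.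
  split; first by rewrite !size_take_min !size_drop; lia.
  split; first by rewrite !size_take_min !size_drop; lia.
  by split; [apply/eqP|split; apply/eqP].
- move=> [u1 [u2 [u3 [E [S1 [S2 [N1 [N2 N3]]]]]]]]; subst x.
  rewrite /apb !size_cat -S2 -S1.
  have -> : (size u1 + (size u1 + size u1)) %/ 3 = size u1 by lia.
  rewrite take_size_cat // drop_size_cat // take_size_cat ?S1 //.
  rewrite catA drop_size_cat; last by rewrite size_cat; lia.
  apply/and4P; split; [apply/eqP; lia|apply/eqP|apply/eqP|apply/eqP] => //.
Qed.

Definition avoidsb (w : word) : bool :=
  ~~ has (fun i => has (fun m => apb (take m (drop i w))) (iota 0 (size w).+1)) (iota 0 (size w).+1).

Lemma avoidsbP w : reflect (avoids_antipower3 w) (avoidsb w).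
Proof.
apply: (iffP negP).
- move=> H [x [[p [s E]] Hx]]; apply: H; apply/hasP; exists (size p).
    by rewrite mem_iota E !size_cat; lia.
  apply/hasP; exists (size x); first by rewrite mem_iota E !size_cat; lia.
  by rewrite E drop_size_cat // take_size_cat //; apply/apbP.
- move=> H /hasP [i Hi /hasP [m Hm /apbP Hx]]; apply: H; exists (take m (drop i w)); split => //.
  by exists (take i w), (drop m (drop i w)); rewrite !cat_take_drop.
Qed.


Definition okPp n (Q : seq nat) : Prop :=
  Q = [::] \/ (exists2 a, a < n & Q = [:: a]) \/ Q = [:: n-2; n-1] \/ Q = [:: n-3; n-1] \/
  Q = [:: 0; 1] \/ Q = [:: 0; 2] \/ (n %% 3 != 0 /\ Q = [:: 0; n-1]) \/
  (n %% 3 = 2 /\ (Q = [:: 0; n-2] \/ Q = [:: 1; n-1] \/ Q = [:: 0; n-2; n-1] \/ Q = [:: 0; 1; n-1])).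

Definition thirdsAP N (P : seq nat) : Prop :=
  exists l, N = 3 * l /\ (exists2 i, i < l & (i \in P) != (i + l \in P)) /\
    (exists2 i, i < l & (i \in P) != (i + 2 * l \in P)) /\
    (exists2 i, i < l & (i + l \in P) != (i + 2 * l \in P)).

Ltac destr_all := repeat match goal with
  | H : _ \/ _ |- _ => destruct H
  | H : _ /\ _ |- _ => destruct H
  | H : exists2 _, _ & _ |- _ => destruct H
  | H : exists _, _ |- _ => destruct H
  | H : _ :: _ = _ :: _ |- _ => injection H; clear H; intros
  | H : [::] = _ :: _ |- _ => discriminate H
  | H : _ :: _ = [::] |- _ => discriminate H
  end.

Ltac lsteq := solve [ repeat match goal with
  | |- _ :: _ = _ :: _ => refine (f_equal2 cons _ _); [first [reflexivity | lia]|]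
  | |- [::] = [::] => reflexivity end ].

Ltac solve_okP :=
  solve [ left; lsteq
  | right; left; eexists; [|lsteq]; lia
  | do 2 right; left; lsteq
  | do 3 right; left; lsteq
  | do 4 right; left; lsteq
  | do 5 right; left; lsteq
  | do 6 right; left; split; [lia|lsteq]
  | do 7 right; split; [lia|]; first [left; lsteq | right; left; lsteq | do 2 right; left; lsteq | do 3 right; lsteq] ].

Ltac wit1 l := first [ exists 0; [lia | rewrite !inE; lia] | exists 1; [lia | rewrite !inE; lia] | exists 2; [lia | rewrite !inE; lia] | exists (l - 1); [lia | rewrite !inE; lia]
  | exists (l-2); [lia | rewrite !inE; lia] | exists (l-3); [lia | rewrite !inE; lia]].

Ltac solve_thirds N := right; exists (N %/ 3); split; [lia|];
  split; [wit1 (N %/ 3)| split; [wit1 (N %/ 3) | wit1 (N %/ 3)]].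

Lemma step_arith n P : 12 <= n -> sorted ltn P -> all (fun i => i <= n) P ->
  okPp n [seq i <- P | i < n] -> okPp n [seq i - 1 | i <- P & 0 < i] ->
  okPp n.+1 P \/ thirdsAP n.+1 P.
Proof.
move=> Hn.
case: P => [|a [|b [|c [|d [|e P]]]]] /=; move=> Hs Ha;
  repeat (case: ifP => ?; try (exfalso; lia)); rewrite /okPp /= => H1 H2; destr_all;
  try (exfalso; lia); subst; (have [Hr|[Hr|Hr]] : n %% 3 = 0 \/ n %% 3 = 1 \/ n %% 3 = 2 by lia);
  first [left; solve_okP | solve_thirds n.+1].
Qed.



Definition inblock l (P : seq nat) :=
  exists2 j, j < 3 & all (fun i => (j * l <= i) && (i < j * l + l)) P.

Lemma back_arith n P : 12 <= n -> okPp n.+1 P ->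
  [/\ okPp n [seq i <- P | i < n], okPp n [seq i - 1 | i <- P & 0 < i] &
      forall l, n.+1 = 3 * l -> inblock l P].
Proof.
move=> Hn; rewrite /okPp => H; destr_all; subst => /=;
  repeat (case: ifP => ?; try (exfalso; lia)); rewrite /= /inblock.
all: (have [Hr|[Hr|Hr]] : n %% 3 = 0 \/ n %% 3 = 1 \/ n %% 3 = 2 by lia);
  (split; [solve_okP|solve_okP|]); move=> l Hl;
  first [ exfalso; lia
        | exists 0; [done| rewrite /= ?andbT; lia]
        | exists 1; [done| rewrite /= ?andbT; lia]
        | exists 2; [done| rewrite /= ?andbT; lia]
        | match goal with |- context [ [:: ?x] ] =>
            (have [?|[?|?]] : x < l \/ (l <= x < 2*l) \/ 2*l <= x by lia);
            [exists 0|exists 1|exists 2]; try done; rewrite /= ?andbT; lia end ].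
Qed.

Lemma okPp_sorted n Q : 4 <= n -> okPp n Q -> sorted ltn Q /\ all (fun i => i < n) Q.
Proof. move=> Hn; rewrite /okPp => H; destr_all; subst => /=; split; lia. Qed.

Lemma okPp_rev n Q : 4 <= n -> okPp n Q -> okPp n (rev (map (fun i => n - 1 - i) Q)).
Proof.
move=> Hn; rewrite /okPp => H; destr_all; subst; rewrite /rev /=;
(have [Hr|[Hr|Hr]] : n %% 3 = 0 \/ n %% 3 = 1 \/ n %% 3 = 2 by lia); solve_okP.
Qed.

Definition okPlist n : seq (seq nat) :=
  [:: [::]] ++ [seq [:: a] | a <- iota 0 n] ++
  [:: [:: n-2; n-1]; [:: n-3; n-1]; [:: 0; 1]; [:: 0; 2]] ++
  (if n %% 3 == 0 then [::] else [:: [:: 0; n-1]]) ++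
  (if n %% 3 == 2 then [:: [:: 0; n-2]; [:: 1; n-1]; [:: 0; n-2; n-1]; [:: 0; 1; n-1]] else [::]).

Lemma okPlistP n Q : reflect (okPp n Q) (Q \in okPlist n).
Proof.
apply: (iffP idP).
- rewrite /okPlist !mem_cat => /or4P [| /mapP [a Ha ->] | | ].
  + by rewrite inE => /eqP ->; left.
  + by right; left; exists a => //; move: Ha; rewrite mem_iota; lia.
  + rewrite !inE => /or4P [] /eqP ->; rewrite /okPp; solve_okP.
  + move=> /orP [].
    * case: ifP => H; rewrite ?inE // => /eqP ->; do 6 right; left; split => //; lia.
    * case: ifP => H; rewrite ?inE // => /or4P [] /eqP ->; do 7 right; (split; [lia|]);
      [left | right; left | do 2 right; left | do 3 right] => //.
- rewrite /okPp /okPlist => H; destr_all; subst; rewrite !mem_cat.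
  all: try (by apply/orP; right; apply/orP; left; apply/mapP; exists x => //; rewrite mem_iota; lia).
  all: (have [Hr|[Hr|Hr]] : n %% 3 = 0 \/ n %% 3 = 1 \/ n %% 3 = 2 by lia);
     rewrite Hr /= ?inE ?eqxx ?orbT //; lia.
Qed.

Lemma size_okPlist n : size (okPlist n) = n + 5 + (n %% 3 != 0) + 4 * (n %% 3 == 2).
Proof.
rewrite /okPlist !size_cat size_map size_iota /=.
case: ifP => H1; case: ifP => H2 /=; lia.
Qed.


Ltac simpl_lt := repeat match goal with |- context [?x < ?y] =>
  first [rewrite (_ : x < y = true); last by lia | rewrite (_ : x < y = false); last by lia] end.

Definition altw (b : bool) n : word := mkseq (fun i => b (+) odd i) n.
Lemma size_altw b n : size (altw b n) = n. Proof. by rewrite size_mkseq. Qed.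
Lemma nth_altw b n i : i < n -> nth false (altw b n) i = b (+) odd i.
Proof. by move=> Hi; rewrite nth_mkseq. Qed.
Lemma altwS b n : altw b n.+1 = b :: altw (~~ b) n.
Proof.
apply: word_eq => [|i Hi]; first by rewrite size_altw /= size_altw.
rewrite size_altw in Hi; rewrite nth_altw //.
case: i Hi => [|i] Hi /=; first by rewrite addbF.
by rewrite nth_altw; [case: b; case: (odd i) | lia].
Qed.
Lemma count_altw b n : count id (altw b n) = if b then uphalf n else n./2.
Proof.
elim: n b => [|n IH] b; first by case: b.
by rewrite altwS /= IH; case: b.
Qed.
Lemma count_altw_bnd b n : n <= 2 * count id (altw b n) + 1 /\ 2 * count id (altw b n) <= n + 1.
Proof.
rewrite count_altw uphalf_half; have := odd_double_half n; rewrite -muln2.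
by case: b; case: (odd n) => /=; lia.
Qed.
Lemma take_altw b n : take n (altw b n.+1) = altw b n.
Proof.
apply: word_eq => [|i]; rewrite size_take_min !size_altw; try lia; move=> Hi; rewrite nth_take; last lia. rewrite !nth_altw //; lia.
Qed.
Lemma behead_altw b n : behead (altw b n.+1) = altw (~~ b) n.
Proof. by rewrite altwS. Qed.
Lemma compl_altw b n : compl (altw b n) = altw (~~ b) n.
Proof.
apply: word_eq => [|i]; rewrite size_compl !size_altw //; move=> Hi.
by rewrite /compl (nth_map false) ?size_altw // !nth_altw // addNb.
Qed.
Lemma nth_compl w i : i < size w -> nth false (compl w) i = ~~ nth false w i.
Proof. by move=> Hi; rewrite /compl (nth_map false). Qed.
Lemma rev_altw b n : rev (altw b n) = altw (b (+) odd n.-1) n.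
Proof.
apply: word_eq => [|i]; rewrite size_rev !size_altw //; move=> Hi.
rewrite nth_rev size_altw // !nth_altw; lia.
Qed.

Lemma alt_noap b n : ~ antipower3 (altw b n).
Proof.
move=> /ap_nth [l [Hs _ [i Hi H] _]]; move: Hs H; rewrite size_altw => Hs.
rewrite !nth_altw; try lia.
Qed.

Lemma mkw_nil a : nseq a false = mkw a [::].
Proof.
apply: word_eq => [|i]; rewrite size_nseq ?size_mkw //; move=> Hi.
by rewrite nth_nseq nth_mkw Hi in_nil.
Qed.

Lemma mkw_cat m n P Q : all (fun i => i < m) P ->
  mkw m P ++ mkw n Q = mkw (m + n) (P ++ map (addn m) Q).
Proof.
move=> HP; apply: word_eq => [|i]; rewrite size_cat !size_mkw //; move=> Hi.
rewrite nth_cat size_mkw !nth_mkw mem_cat.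
case: (ltnP i m) => Him /=.
- have -> : (i \in map (addn m) Q) = false.
    by apply/negbTE/mapP => -[j _ E]; lia.
  by rewrite orbF; lia.
- have -> : (i \in P) = false.
    by apply/negbTE/negP => /(allP HP); lia.
  have -> : i = m + (i - m) by lia.
  rewrite mem_map; last exact: addnI.
  have -> : m + (i - m) - m = i - m by lia.
  rewrite orFb; congr (_ && _); lia.
Qed.

Lemma mkw_congr n1 n2 P Q : n1 = n2 -> (forall i, i < n1 -> (i \in P) = (i \in Q)) ->
  mkw n1 P = mkw n2 Q.
Proof.
move=> <- H; apply: word_eq => [|i]; rewrite ?size_mkw //; move=> Hi.
by rewrite !nth_mkw Hi H.
Qed.

Lemma rev_mkw n P Q : (forall i, i < n -> (i \in Q) = (n - i.+1 \in P)) ->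
  rev (mkw n P) = mkw n Q.
Proof.
move=> H; apply: word_eq => [|i]; rewrite size_rev ?size_mkw //; move=> Hi.
rewrite nth_rev size_mkw // !nth_mkw Hi H //; by simpl_lt.
Qed.

Lemma F0 a : nseq a false = mkw a [::].
Proof. exact: mkw_nil. Qed.
Lemma F1 a b : nseq a false ++ true :: nseq b false = mkw (a + b + 1) [:: a].
Proof.
rewrite !mkw_nil -cat1s (_ : [:: true] = mkw 1 [:: 0]) // mkw_cat // mkw_cat //;
try (apply: mkw_congr => [|i Hi]; [lia | rewrite /= !inE; lia]).
Qed.
Lemma F2 a : nseq a false ++ [:: false; true; true] = mkw (a + 3) [:: a + 1; a + 2].
Proof.
rewrite !mkw_nil (_ : [:: false; true; true] = mkw 3 [:: 1; 2]) // mkw_cat //;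
try (apply: mkw_congr => [|i Hi]; [lia | rewrite /= !inE; lia]).
Qed.
Lemma F3 a : nseq a false ++ [:: true; false; true] = mkw (a + 3) [:: a; a + 2].
Proof.
rewrite !mkw_nil (_ : [:: true; false; true] = mkw 3 [:: 0; 2]) // mkw_cat //;
try (apply: mkw_congr => [|i Hi]; [lia | rewrite /= !inE; lia]).
Qed.
Lemma F4 a : true :: nseq a false ++ [:: true] = mkw (a + 2) [:: 0; a + 1].
Proof.
rewrite !mkw_nil -cat1s (_ : [:: true] = mkw 1 [:: 0]) // mkw_cat // mkw_cat //;
try (apply: mkw_congr => [|i Hi]; [lia | rewrite /= !inE; lia]).
Qed.
Lemma F5 a : true :: nseq a false ++ [:: true; false] = mkw (a + 3) [:: 0; a + 1].
Proof.
rewrite !mkw_nil -cat1s (_ : [:: true] = mkw 1 [:: 0]) // (_ : [:: true; false] = mkw 2 [:: 0]) //.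
rewrite mkw_cat // mkw_cat //;
try (apply: mkw_congr => [|i Hi]; [lia | rewrite /= !inE; lia]).
Qed.
Lemma F6 a : true :: nseq a false ++ [:: true; true] = mkw (a + 3) [:: 0; a + 1; a + 2].
Proof.
rewrite !mkw_nil -cat1s (_ : [:: true] = mkw 1 [:: 0]) // (_ : [:: true; true] = mkw 2 [:: 0; 1]) //.
rewrite mkw_cat // mkw_cat //;
try (apply: mkw_congr => [|i Hi]; [lia | rewrite /= !inE; lia]).
Qed.
Lemma Falt m : flatten (nseq m [:: false; true]) = altw false m.*2.
Proof. elim: m => [//|m IH]; by rewrite doubleS !altwS /= IH. Qed.
Lemma Falt0 m : flatten (nseq m [:: false; true]) ++ [:: false] = altw false m.*2.+1.
Proof. elim: m => [//|m IH]; by rewrite doubleS altwS altwS /= IH. Qed.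

Lemma thirds_ap N P : thirdsAP N P -> antipower3 (mkw N P).
Proof.
move=> [l [HN [[i1 Hi1 H1] [[i2 Hi2 H2] [i3 Hi3 H3]]]]].
apply (proj2 (ap_nth _)); exists l; split; rewrite ?size_mkw //;
  [exists i1|exists i2|exists i3] => //; rewrite !nth_mkw; simpl_lt; rewrite /= //.
Qed.

Lemma block_noap N P : (forall l, N = 3 * l -> inblock l P) -> ~ antipower3 (mkw N P).
Proof.
move=> H /ap_nth [l [Hs [i1 Hi1 H1] [i2 Hi2 H2] [i3 Hi3 H3]]].
move: Hs H1 H2 H3; rewrite size_mkw => Hs.
case: (H l Hs) => j Hj Hall.
have F x : x \in P -> j * l <= x < j * l + l by move/(allP Hall).
rewrite !nth_mkw.
case: j Hj Hall F => [|[|[|j]]] // _ _ F.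
- move=> _ _; case E1: (i3 + l \in P); first by have := F _ E1; lia.
  case E2: (i3 + 2 * l \in P); first by have := F _ E2; lia.
  by rewrite !andbF.
- move=> _ + _; case E1: (i2 \in P); first by have := F _ E1; lia.
  case E2: (i2 + 2 * l \in P); first by have := F _ E2; lia.
  by rewrite !andbF.
- move=> + _ _; case E1: (i1 \in P); first by have := F _ E1; lia.
  case E2: (i1 + l \in P); first by have := F _ E2; lia.
  by rewrite !andbF.
Qed.


Definition charb n (w : word) : bool :=
  [|| w == altw false n, w == altw true n, ones w \in okPlist n | ones (compl w) \in okPlist n].

Definition Lsel n := if n %% 3 == 0 then L0 else if n %% 3 == 1 then L1 else L2.

Lemma okPp_size n Q : okPp n Q -> size Q <= 3.
Proof. rewrite /okPp => H; destr_all; subst => //. Qed.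

Lemma count_ones_ok n w : ones w \in okPlist n -> count id w <= 3.
Proof. by move/okPlistP/okPp_size; rewrite size_ones. Qed.

Lemma charb_compl n w : size w = n -> charb n (compl w) = charb n w.
Proof.
move=> Hs; rewrite /charb complK.
have E b : (compl w == altw b n) = (w == altw (~~ b) n).
  apply/eqP/eqP => [E|->]; last by rewrite compl_altw negbK.
  by rewrite -(complK w) E compl_altw.
rewrite !E /=.
by case: (w == altw true n); case: (w == altw false n); case: (_ \in _); case: (_ \in _).
Qed.

Lemma ones_rev_ok n w : 4 <= n -> size w = n -> ones w \in okPlist n -> ones (rev w) \in okPlist n.
Proof.
move=> Hn Hs /okPlistP H.
have [Hso Hal] := okPp_sorted Hn H.
have H' := okPp_rev Hn H.
have [Hso' Hal'] := okPp_sorted Hn H'.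
have -> : rev w = mkw n (rev (map (fun i => n - 1 - i) (ones w))).
  rewrite -{1}(mkw_ones w) Hs; apply: rev_mkw => i Hi.
  rewrite mem_rev; apply/mapP/idP => [[j Hj ->]|Hin].
  - move: (allP Hal j Hj) => Hj'; have -> : n - (n - 1 - j).+1 = j by lia. by [].
  - by exists (n - i.+1) => //; lia.
by rewrite ones_mkw //; apply/okPlistP.
Qed.

Lemma charb_rev n w : 4 <= n -> size w = n -> charb n w -> charb n (rev w).
Proof.
move=> Hn Hs /or4P [/eqP E|/eqP E|H|H]; rewrite /charb.
- rewrite E rev_altw; by case: (odd n.-1); rewrite /= eqxx ?orbT.
- rewrite E rev_altw; by case: (odd n.-1); rewrite /= eqxx ?orbT.
- by rewrite (ones_rev_ok Hn Hs H) !orbT.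
- rewrite /compl map_rev (ones_rev_ok Hn _ H) ?orbT //.
  by rewrite size_map.
Qed.

Lemma charb_mkw n Q : sorted ltn Q -> all (fun i => i < n) Q -> okPp n Q -> charb n (mkw n Q).
Proof. by move=> H1 H2 H3; rewrite /charb ones_mkw //; apply/or4P; constructor 3; apply/okPlistP. Qed.

Lemma L0_Lsel n u : L0 u -> Lsel n u.
Proof. by rewrite /Lsel => H; case: ifP => _ //; case: ifP => _; [left|left; left]. Qed.

Ltac fam_tac := apply: charb_mkw; rewrite /= ?andbT; try lia; rewrite /okPp; solve_okP.

Lemma L0_charb n u : 8 <= n -> size u = n -> L0 u -> charb n u.
Proof.
move=> Hn Hs; case=> [[a E]|[[m E]|[[m E]|[[a [b E]]|[[a E]|[a E]]]]]]; subst u.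
- rewrite size_nseq in Hs; subst a; rewrite F0; fam_tac.
- rewrite Falt size_altw in Hs *; by rewrite Hs /charb eqxx.
- rewrite Falt0 size_altw in Hs *; by rewrite Hs /charb eqxx.
- rewrite F1 size_mkw in Hs *; subst n; fam_tac.
- rewrite F2 size_mkw in Hs *; subst n; fam_tac.
- rewrite F3 size_mkw in Hs *; subst n; fam_tac.
Qed.

Lemma Lsel_charb n u : 8 <= n -> size u = n -> Lsel n u -> charb n u.
Proof.
move=> Hn Hs; rewrite /Lsel.
case: ifP => H0; first exact: L0_charb.
case: ifP => H1.
- case; first exact: L0_charb.
  move=> [a E]; subst u; rewrite F4 size_mkw in Hs *; subst n; fam_tac.
- case; [case; first exact: L0_charb|].
  + move=> [a E]; subst u; rewrite F4 size_mkw in Hs *; subst n; fam_tac.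
  + case=> [[a E]|[a E]]; subst u.
    * rewrite F5 size_mkw in Hs *; subst n; fam_tac.
    * rewrite F6 size_mkw in Hs *; subst n; fam_tac.
Qed.

Lemma size_Cl n L w : Cl n L w -> size w = n.
Proof.
move=> [u [Hs _ H]]; case: H => [->|[->|[->|->]]]; by rewrite ?size_compl ?size_rev.
Qed.

Lemma Cl_charb n w : 8 <= n -> Cl n (Lsel n) w -> charb n w.
Proof.
move=> Hn [u [Hs HL H]]; have Hc := Lsel_charb Hn Hs HL.
case: H => [->|[->|[->|->]]] //.
- by rewrite charb_compl.
- by apply: charb_rev => //; lia.
- by rewrite charb_compl ?size_rev //; apply: charb_rev => //; lia.
Qed.

Lemma Cl_compl n L w : Cl n L w -> Cl n L (compl w).
Proof.
move=> [u [Hs HL H]]; exists u; split => //.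
case: H => [->|[->|[->|->]]]; rewrite ?complK; tauto.
Qed.

Lemma Cl_id n L u : size u = n -> L u -> Cl n L u.
Proof. by move=> Hs HL; exists u; split => //; left. Qed.
Lemma Cl_rev n L u : size u = n -> L u -> Cl n L (rev u).
Proof. by move=> Hs HL; exists u; split => //; right; right; left. Qed.

Lemma ones_Cl n w : 8 <= n -> size w = n -> ones w \in okPlist n -> Cl n (Lsel n) w.
Proof.
move=> Hn Hs /okPlistP H.
rewrite -(mkw_ones w) Hs; move: (ones w) H => Q H; clear Hs w.
have Hm1 : n %% 3 != 0 -> L1 (true :: nseq (n - 2) false ++ [:: true]) -> Lsel n (true :: nseq (n - 2) false ++ [:: true]).
  by move=> Hr HL; rewrite /Lsel ifF; [case: ifP => _; [|left] | lia].
have Hm2 : n %% 3 = 2 -> forall u, (L_10star10 u \/ L_10star11 u) -> Lsel n u.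
  by move=> Hr u HL; rewrite /Lsel ifF; [rewrite ifF; [right|lia]|lia].
have E3 : n - 3 + 3 = n by lia.
move: H; rewrite /okPp => H; destr_all; subst.
- rewrite -F0; apply: Cl_id; first by rewrite size_nseq.
  by apply: L0_Lsel; left; exists n.
- have -> : mkw n [:: x] = nseq x false ++ true :: nseq (n - 1 - x) false.
    by rewrite F1; apply: mkw_congr => [|i Hi]; [lia|].
  apply: Cl_id; first by rewrite size_cat /= !size_nseq; lia.
  by apply: L0_Lsel; do 3 right; left; exists x, (n - 1 - x).
- have -> : mkw n [:: n - 2; n - 1] = nseq (n - 3) false ++ [:: false; true; true].
    by rewrite F2; apply: mkw_congr => [|i Hi]; [lia|rewrite !inE; lia].
  apply: Cl_id; first by rewrite size_cat /= !size_nseq; lia.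
  by apply: L0_Lsel; do 4 right; left; exists (n - 3).
- have -> : mkw n [:: n - 3; n - 1] = nseq (n - 3) false ++ [:: true; false; true].
    by rewrite F3; apply: mkw_congr => [|i Hi]; [lia|rewrite !inE; lia].
  apply: Cl_id; first by rewrite size_cat /= !size_nseq; lia.
  by apply: L0_Lsel; do 5 right; exists (n - 3).
- have -> : mkw n [:: 0; 1] = rev (nseq (n - 3) false ++ [:: false; true; true]).
    by rewrite F2 E3; symmetry; apply: rev_mkw => i Hi; rewrite !inE; lia.
  apply: Cl_rev; first by rewrite size_cat /= !size_nseq; lia.
  by apply: L0_Lsel; do 4 right; left; exists (n - 3).
- have -> : mkw n [:: 0; 2] = rev (nseq (n - 3) false ++ [:: true; false; true]).
    by rewrite F3 E3; symmetry; apply: rev_mkw => i Hi; rewrite !inE; lia.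
  apply: Cl_rev; first by rewrite size_cat /= !size_nseq; lia.
  by apply: L0_Lsel; do 5 right; exists (n - 3).
- have -> : mkw n [:: 0; n - 1] = true :: nseq (n - 2) false ++ [:: true].
    by rewrite F4; apply: mkw_congr => [|i Hi]; [lia|rewrite !inE; lia].
  apply: Cl_id; first by rewrite /= size_cat /= !size_nseq; lia.
  by apply: Hm1 => //; right; exists (n - 2).
- have -> : mkw n [:: 0; n - 2] = true :: nseq (n - 3) false ++ [:: true; false].
    by rewrite F5; apply: mkw_congr => [|i Hi]; [lia|rewrite !inE; lia].
  apply: Cl_id; first by rewrite /= size_cat /= !size_nseq; lia.
  by apply: Hm2 => //; left; exists (n - 3).
- have -> : mkw n [:: 1; n - 1] = rev (true :: nseq (n - 3) false ++ [:: true; false]).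
    by rewrite F5 E3; symmetry; apply: rev_mkw => i Hi; rewrite !inE; lia.
  apply: Cl_rev; first by rewrite /= size_cat /= !size_nseq; lia.
  by apply: Hm2 => //; left; exists (n - 3).
- have -> : mkw n [:: 0; n - 2; n - 1] = true :: nseq (n - 3) false ++ [:: true; true].
    by rewrite F6; apply: mkw_congr => [|i Hi]; [lia|rewrite !inE; lia].
  apply: Cl_id; first by rewrite /= size_cat /= !size_nseq; lia.
  by apply: Hm2 => //; right; exists (n - 3).
- have -> : mkw n [:: 0; 1; n - 1] = rev (true :: nseq (n - 3) false ++ [:: true; true]).
    by rewrite F6 E3; symmetry; apply: rev_mkw => i Hi; rewrite !inE; lia.
  apply: Cl_rev; first by rewrite /= size_cat /= !size_nseq; lia.
  by apply: Hm2 => //; right; exists (n - 3).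
Qed.

Lemma charb_Cl n w : 8 <= n -> size w = n -> charb n w -> Cl n (Lsel n) w.
Proof.
move=> Hn Hs /or4P [/eqP E|/eqP E|H|H].
- have HL : L0 w.
    rewrite E; have := odd_double_half n; case: (odd n) => /= Hn2; rewrite ?add1n ?add0n in Hn2.
    + by right; right; left; exists n./2; rewrite Falt0 Hn2.
    + by right; left; exists n./2; rewrite Falt Hn2.
  by apply: Cl_id => //; apply: L0_Lsel.
- have HL : L0 (altw false n).
    have := odd_double_half n; case: (odd n) => /= Hn2; rewrite ?add1n ?add0n in Hn2.
    + by right; right; left; exists n./2; rewrite Falt0 Hn2.
    + by right; left; exists n./2; rewrite Falt Hn2.
  exists (altw false n); split; [by rewrite size_altw|exact: L0_Lsel|].
  by right; left; rewrite E compl_altw.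
- exact: ones_Cl.
- rewrite -(complK w); apply: Cl_compl; apply: ones_Cl => //; by rewrite size_compl.
Qed.


Fixpoint allw n : seq word :=
  if n is m.+1 then [seq b :: w | b <- [:: false; true], w <- allw m] else [:: [::]].

Lemma allw_mem w : w \in allw (size w).
Proof.
elim: w => [|b w IH] //=.
have Hc (c : bool) : injective (cons c) by move=> x y [].
by rewrite !mem_cat; case: b; rewrite (mem_map (Hc _)) IH ?orbT.
Qed.

Lemma base_check : all (fun w => avoidsb w == charb 12 w) (allw 12).
Proof. vm_compute. reflexivity. Qed.

Lemma base12 w : size w = 12 -> (avoids_antipower3 w <-> charb 12 w).
Proof.
move=> Hs; have Hw : w \in allw 12 by rewrite -Hs; exact: allw_mem.
have /eqP E := allP base_check w Hw.
by rewrite -E; split => [/avoidsbP|/avoidsbP].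
Qed.

Lemma count_pb n w : size w = n.+1 ->
  (count id (take n w) <= count id w <= (count id (take n w)).+1) /\
  (count id (behead w) <= count id w <= (count id (behead w)).+1).
Proof.
move=> Hs; split.
- have E := congr1 (count id) (cat_take_drop n w); rewrite count_cat in E.
  have := count_size id (drop n w); rewrite size_drop Hs; lia.
- case: w Hs => [|a s] //= Hs; case: a => /=; lia.
Qed.

Lemma step_core n w : 12 <= n -> size w = n.+1 -> ones (take n w) \in okPlist n ->
  ones (behead w) \in okPlist n -> ones w \in okPlist n.+1 \/ antipower3 w.
Proof.
move=> Hn Hs /okPlistP H1 /okPlistP H2.
rewrite ones_take in H1; rewrite ones_behead in H2.
have Ha : all (fun i => i <= n) (ones w).
  by apply/allP => i; rewrite mem_ones => /andP [Hi _]; lia.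
case: (step_arith Hn (sorted_ones w) Ha H1 H2) => [H|H].
- by left; apply/okPlistP.
- by right; rewrite -(mkw_ones w) Hs; exact: thirds_ap.
Qed.

Lemma back_core n w : 12 <= n -> size w = n.+1 -> ones w \in okPlist n.+1 ->
  [/\ ones (take n w) \in okPlist n, ones (behead w) \in okPlist n & ~ antipower3 w].
Proof.
move=> Hn Hs /okPlistP H.
case: (back_arith Hn H) => H1 H2 H3.
split; [rewrite ones_take; exact/okPlistP | rewrite ones_behead; exact/okPlistP|].
by rewrite -(mkw_ones w) Hs; apply: block_noap.
Qed.

Lemma alt_glue n w b b' : 2 <= n -> size w = n.+1 -> take n w = altw b n ->
  behead w = altw b' n -> w = altw b n.+1.
Proof.
move=> Hn Hs Ep Es.
have E1 : nth false w 1 = b'.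
  move: (congr1 (nth false ^~ 0) Es) => /=; rewrite nth_behead nth_altw; lia.
have E2 : nth false w 1 = ~~ b.
  move: (congr1 (nth false ^~ 1) Ep) => /=; rewrite nth_take ?nth_altw; lia.
apply: word_eq => [|i]; rewrite Hs ?size_altw // => Hi.
rewrite nth_altw //.
case: (ltnP i n) => Hin.
- move: (congr1 (nth false ^~ i) Ep) => /=; rewrite nth_take // nth_altw //.
- have Ei : i = n by lia.
  subst i.
  move: (congr1 (nth false ^~ n.-1) Es) => /=; rewrite nth_behead nth_altw; last lia.
  have -> : n.-1.+1 = n by lia.
  lia.
Qed.

Lemma mainT n : 12 <= n -> forall w, size w = n -> (avoids_antipower3 w <-> charb n w).
Proof.
elim: n => [//|n IH] Hn w Hs.
have [E12|Hn'] : n.+1 = 12 \/ 12 <= n by lia.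
  by move: Hs; rewrite E12 => Hs; exact: base12.
have Sp : size (take n w) = n by rewrite size_take_min; lia.
have Ss : size (behead w) = n by rewrite size_behead Hs.
have IHp := IH Hn' _ Sp; have IHs := IH Hn' _ Ss.
have [/andP [cp1 cp2] /andP [cs1 cs2]] := count_pb Hs.
have Cw := count_compl w; have Cp := count_compl (take n w); have Cs := count_compl (behead w).
rewrite Hs in Cw; rewrite Sp in Cp; rewrite Ss in Cs.
have Hmt : take n (compl w) = compl (take n w) by rewrite /compl map_take.
have Hmb : behead (compl w) = compl (behead w) by rewrite /compl behead_map.
have Scw : size (compl w) = n.+1 by rewrite size_compl.
split.
- move/(avoidsF Hs) => [Ap As Na].
  have := proj1 IHp Ap; have := proj1 IHs As.
  case/or4P => [/eqP Es|/eqP Es|Os|Os]; case/or4P => [/eqP Ep|/eqP Ep|Op|Op].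
  all: try (have := count_altw_bnd false n; have := count_altw_bnd true n;
            rewrite -?Ep -?Es => ? ?).
  all: try (have := count_ones_ok Op); try (have := count_ones_ok Os); move=> *.
  all: try (exfalso; lia).
  1-4: by rewrite (alt_glue _ Hs Ep Es) /charb ?eqxx ?orTb ?orbT //; lia.
  + case: (step_core Hn' Hs Op Os) => [H|H]; first by rewrite /charb H ?orbT.
    by case: Na.
  + rewrite -Hmt in Op; rewrite -Hmb in Os.
    case: (step_core Hn' Scw Op Os) => [H|H]; first by rewrite /charb H ?orbT.
    by case: Na; apply/antipower3_compl.
- try (match goal with H : is_true (charb _ _) |- _ => move: H end); move=> C.
  suff HH : [/\ avoids_antipower3 (take n w), avoids_antipower3 (behead w) & ~ antipower3 w].
    exact: (proj2 (avoidsF Hs) HH).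
  move: C; rewrite /charb => /or4P [/eqP E|/eqP E|O|O].
  + split; [apply: (proj2 IHp)|apply: (proj2 IHs)|rewrite E; exact: alt_noap];
      by rewrite E ?take_altw ?behead_altw /charb ?eqxx ?orTb ?orbT.
  + split; [apply: (proj2 IHp)|apply: (proj2 IHs)|rewrite E; exact: alt_noap];
      by rewrite E ?take_altw ?behead_altw /charb ?eqxx ?orTb ?orbT.
  + have [H1 H2 H3] := back_core Hn' Hs O.
    by split => //; [apply/IHp|apply/IHs]; rewrite /charb ?H1 ?H2 ?orbT.
  + have [H1 H2 H3] := back_core Hn' Scw O.
    rewrite Hmt in H1; rewrite Hmb in H2.
    split; [apply: (proj2 IHp)|apply: (proj2 IHs)|]; rewrite /charb ?H1 ?H2 ?orbT //.
    by move/antipower3_compl.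
Qed.


Lemma A_iff n w : 12 <= n -> (A n w <-> Cl n (Lsel n) w).
Proof.
move=> Hn; split.
- move=> [Hs Ha]; apply: charb_Cl => //; first lia.
  exact: (proj1 (mainT Hn Hs) Ha).
- move=> H; have Hs := size_Cl H; split => //.
  apply: (proj2 (mainT Hn Hs)); apply: Cl_charb H; lia.
Qed.

Lemma Lsel0 k : Lsel (3 * k) = L0.
Proof. by rewrite /Lsel (_ : (3 * k) %% 3 = 0) //; lia. Qed.
Lemma Lsel1 k : Lsel (3 * k + 1) = L1.
Proof. by rewrite /Lsel (_ : (3 * k + 1) %% 3 = 1) //; lia. Qed.
Lemma Lsel2 k : Lsel (3 * k + 2) = L2.
Proof. by rewrite /Lsel (_ : (3 * k + 2) %% 3 = 2) //; lia. Qed.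

Definition enumG n : seq word :=
  [:: altw false n; altw true n] ++ [seq mkw n Q | Q <- okPlist n] ++
  [seq compl (mkw n Q) | Q <- okPlist n].

Lemma enum_mem n w : 12 <= n -> (w \in enumG n) <-> (size w = n /\ charb n w).
Proof.
move=> Hn; have H4 : 4 <= n by lia. split.
- rewrite /enumG !mem_cat => /orP [|/orP [/mapP [Q HQ ->]|/mapP [Q HQ ->]]].
  + rewrite !inE => /orP [/eqP ->|/eqP ->]; by rewrite size_altw /charb eqxx ?orbT.
  + have [so al] := okPp_sorted H4 (elimT (okPlistP _ _) HQ).
    by rewrite size_mkw /charb ones_mkw // HQ ?orbT.
  + have [so al] := okPp_sorted H4 (elimT (okPlistP _ _) HQ).
    by rewrite size_compl size_mkw /charb complK ones_mkw // HQ ?orbT.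
- move=> [Hs]; rewrite /charb => /or4P [/eqP E|/eqP E|H|H]; rewrite /enumG !mem_cat.
  + by rewrite E !inE eqxx.
  + by rewrite E !inE eqxx ?orbT.
  + by rewrite -(mkw_ones w) Hs map_f ?orbT.
  + rewrite -(complK w) -(mkw_ones (compl w)) size_compl Hs.
    by rewrite (map_f (fun Q => compl (mkw n Q))) ?orbT // -Hs -size_compl mkw_ones.
Qed.

Lemma uniq_okPlist n : 12 <= n -> uniq (okPlist n).
Proof.
move=> Hn; rewrite /okPlist.
have Hi : injective (fun a : nat => [:: a]) by move=> x y [].
have Hm (l : seq nat) : size l != 1 -> (l \in [seq [:: a] | a <- iota 0 n]) = false.
  by move=> H; apply/negbTE/mapP => -[a _ E]; rewrite E in H.
(have [Hr|[Hr|Hr]] : n %% 3 = 0 \/ n %% 3 = 1 \/ n %% 3 = 2 by lia); rewrite Hr /=;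
rewrite mem_cat negb_or cat_uniq (map_inj_uniq Hi) iota_uniq /=.
have En (x : nat) s : ([::] == x :: s) = false by [].
all: rewrite !Hm // /= !inE !eqseq_cons ?eqxx /=.
all: repeat match goal with |- context [ ([::] == ?l) ] => rewrite (_ : ([::] == l) = false); last by [] end.
all: lia.
Qed.

Lemma count_mkw n Q : 4 <= n -> okPp n Q -> count id (mkw n Q) = size Q.
Proof. move=> H4 HQ; have [so al] := okPp_sorted H4 HQ; by rewrite -size_ones ones_mkw. Qed.

Lemma uniq_enum n : 12 <= n -> uniq (enumG n).
Proof.
move=> Hn; have H4 : 4 <= n by lia; have h0 : 0 < n by lia.
have Ca b := count_altw_bnd b n.
have Cm Q : Q \in okPlist n -> count id (mkw n Q) <= 3.
  by move/okPlistP => HQ; rewrite count_mkw //; exact: okPp_size HQ.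
have Cc Q : Q \in okPlist n -> n - 3 <= count id (compl (mkw n Q)).
  move=> HQ; have := Cm Q HQ; rewrite count_compl size_mkw; lia.
have Inj : {in okPlist n &, injective (mkw n)}.
  move=> x y /okPlistP Hx /okPlistP Hy E.
  have [sx ax] := okPp_sorted H4 Hx; have [sy ay] := okPp_sorted H4 Hy.
  by have := congr1 ones E; rewrite !ones_mkw.
rewrite /enumG cat_uniq; apply/and3P; split.
- rewrite /= inE andbT; apply/eqP => E.
  move: (congr1 (fun s => nth false s 0) E); rewrite !nth_altw //; lia.
- apply/hasPn => x; rewrite mem_cat => /orP [/mapP [Q HQ ->]|/mapP [Q HQ ->]];
    rewrite !inE; apply/negP => /orP [] /eqP E; have := congr1 (count id) E;
    have := Ca false; have := Ca true; (try have := Cm Q HQ); (try have := Cc Q HQ); lia.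
- rewrite cat_uniq; apply/and3P; split.
  + by rewrite map_inj_in_uniq ?uniq_okPlist.
  + apply/hasPn => x /mapP [Q HQ ->]; apply/mapP => -[Q' HQ' E].
    have := congr1 (count id) E; have := Cm Q' HQ'; have := Cc Q HQ; lia.
  + rewrite map_inj_in_uniq ?uniq_okPlist // => x y Hx Hy E.
    by apply: Inj => //; have := congr1 compl E; rewrite !complK.
Qed.

Lemma hc N M : 12 <= N -> M = 2 + 2 * size (okPlist N) -> has_card (A N) M.
Proof.
move=> HN ->; exists (enumG N); split.
- exact: uniq_enum.
- rewrite /enumG size_cat size_cat !size_map (_ : size [:: altw false N; altw true N] = 2) //; lia.
- move=> w; rewrite enum_mem //; split.
  + by move=> [Hs C]; split => //; apply: (proj2 (mainT HN Hs)).
  + by move=> [Hs Ha]; split => //; apply: (proj1 (mainT HN Hs)).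
Qed.

Unset Implicit Arguments.

Theorem corollary5 (k : nat) : 6 <= k ->
  (forall w, A (3 * k) w <-> Cl (3 * k) L0 w) /\
      (forall w, A (3 * k + 1) w <-> Cl (3 * k + 1) L1 w) /\
      (forall w, A (3 * k + 2) w <-> Cl (3 * k + 2) L2 w) /\
      has_card (A (3 * k)) (6 * k + 12) /\
      has_card (A (3 * k + 1)) (6 * k + 16) /\
      has_card (A (3 * k + 2)) (6 * k + 26).
Proof.
move=> Hk.
split; first by move=> w; rewrite -(Lsel0 k); apply: A_iff; lia.
split; first by move=> w; rewrite -(Lsel1 k); apply: A_iff; lia.
split; first by move=> w; rewrite -(Lsel2 k); apply: A_iff; lia.
split; first by apply: hc; [lia|]; rewrite size_okPlist (_ : (3 * k) %% 3 = 0) /=; lia.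
split; first by apply: hc; [lia|]; rewrite size_okPlist (_ : (3 * k + 1) %% 3 = 1) /=; lia.
by apply: hc; [lia|]; rewrite size_okPlist (_ : (3 * k + 2) %% 3 = 2) /=; lia.
Qed.
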